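(* Let $s\in\{1/2,1,3/2,\dots\}$, $N=2s$, and let $C,D$ be linear operators on $\mathcal{H}_s$ with Majorana polynomials $p_C,p_D$. Then \[ \mathrm{Tr}(CD)=(N!)^{-2}\,p_C(\partial^a,\partial_a)\,p_D(z_a,z^a), \] where $p_C(\partial^a,\partial_a)$ is the constant-coefficient differential operator obtained from $p_C(z_1,z_2,z^1,z^2)$ by replacing each $z_a$ by $\partial^a=\partial/\partial z^a$ and each $z^a$ by $\partial_a=\partial/\partial z_a$. In particular, if $\mathrm{Tr}(CD)=0$ then $p_C(\partial^a,\partial_a)p_D(z)=0$.
   Context: $\mathcal{H}_s$ is the spin-$s$ Hilbert space with orthonormal $S_z$-eigenbasis $\{|s,m\rangle\}_{m=-s}^{s}$. Treat $z_1,z_2,z^1,z^2$ as four independent complex variables (formally $z^a=\overline{z_a}$), with $\partial_a z_b=\partial^a z^b=\delta_{ab}$, $\partial_a z^b=\partial^a z_b=0$. Define $\langle -\mathbf n_B|=\sum_{m=-s}^{s}(-1)^{s-m}\sqrt{\binom{2s}{s-m}}\,z_1^{s+m}z_2^{s-m}\langle s,m|$ and $|-\mathbf n_B\rangle=\sum_{m=-s}^{s}(-1)^{s-m}\sqrt{\binom{2s}{s-m}}\,(z^1)^{s+m}(z^2)^{s-m}|s,m\rangle$. The Majorana polynomial of an operator $C$ on $\mathcal{H}_s$ is $p_C(z)=\langle -\mathbf n_B|C|-\mathbf n_B\rangle$. *)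

(* Defs.v *)
From HB Require Import structures.
From mathcomp Require Import all_boot all_order all_algebra.
From mathcomp Require Import mpoly.
Set Implicit Arguments. Unset Strict Implicit. Unset Printing Implicit Defensive.
Import Order.TTheory GRing.Theory Num.Theory.
Local Open Scope ring_scope.

(* Variables of {mpoly F[4]}:  index 0 = z_1, 1 = z_2, 2 = z^1, 3 = z^2. *)
Definition vz1 : 'I_4 := @Ordinal 4 0 isT.
Definition vz2 : 'I_4 := @Ordinal 4 1 isT.
Definition vZ1 : 'I_4 := @Ordinal 4 2 isT.
Definition vZ2 : 'I_4 := @Ordinal 4 3 isT.

(* Spin s = N/2; basis |s,m> indexed by k = s + m in 'I_(N+1), so s - m = N - k.
   Coefficient (-1)^(s-m) sqrt(binom(2s, s-m)). *)
Definition majcoef (F : numClosedFieldType) (N : nat) (k : 'I_N.+1) : F :=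
  (-1) ^+ (N - k) * sqrtC ('C(N, N - k))%:R.

(* Majorana polynomial p_C(z) = <-n_B| C |-n_B> of an operator C on H_s
   (matrix in the basis |s,m>, row/column index k = s + m). *)
Definition majorana (F : numClosedFieldType) (N : nat) (C : 'M[F]_N.+1)
  : {mpoly F[4]} :=
  \sum_(j < N.+1) \sum_(k < N.+1)
     (majcoef F j * C j k * majcoef F k) *:
       ('X_vz1 ^+ j * 'X_vz2 ^+ (N - j) * 'X_vZ1 ^+ k * 'X_vZ2 ^+ (N - k)).

Definition swapvar (i : 'I_4) : 'I_4 :=
  if i == vz1 then vZ1 else if i == vz2 then vZ2
  else if i == vZ1 then vz1 else vz2.

(* p(∂^a, ∂_a) q : replace z_a by ∂/∂z^a and z^a by ∂/∂z_a in p, apply to q. *)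
Definition diffop (F : ringType) (p q : {mpoly F[4]}) : {mpoly F[4]} :=
  \sum_(m <- msupp p)
     p@_m *: mderivm [multinom m (swapvar i) | i < 4] q.

(* Main.v *)
Require Import Defs.
From HB Require Import structures.
From mathcomp Require Import all_boot all_order all_algebra.
From mathcomp Require Import mpoly ssrcomplements bigenough ring zify.
Import Order.TTheory GRing.Theory Num.Theory BigEnough.
Local Open Scope ring_scope.

Definition sw (m : 'X_{1..4}) : 'X_{1..4} := [multinom m (swapvar i) | i < 4].

Definition MM (N j k : nat) : 'X_{1..4} :=
  (U_(vz1) *+ j + U_(vz2) *+ (N-j) + U_(vZ1) *+ k + U_(vZ2) *+ (N-k))%MM.

Lemma MM0 N j k : MM N j k vz1 = j. Proof. by rewrite !mnmDE !mulmnE !mnm1E /= ?mul0n ?mul1n ?add0n ?addn0. Qed.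
Lemma MM1 N j k : MM N j k vz2 = (N - j)%N. Proof. by rewrite !mnmDE !mulmnE !mnm1E /= ?mul0n ?mul1n ?add0n ?addn0. Qed.
Lemma MM2 N j k : MM N j k vZ1 = k. Proof. by rewrite !mnmDE !mulmnE !mnm1E /= ?mul0n ?mul1n ?add0n ?addn0. Qed.
Lemma MM3 N j k : MM N j k vZ2 = (N - k)%N. Proof. by rewrite !mnmDE !mulmnE !mnm1E /= ?mul0n ?mul1n ?add0n ?addn0. Qed.
Lemma sw0 m : sw m vz1 = m vZ1. Proof. by rewrite mnmE. Qed.
Lemma sw1 m : sw m vz2 = m vZ2. Proof. by rewrite mnmE. Qed.
Lemma sw2 m : sw m vZ1 = m vz1. Proof. by rewrite mnmE. Qed.
Lemma sw3 m : sw m vZ2 = m vz2. Proof. by rewrite mnmE. Qed.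

Lemma prod4 (f : 'I_4 -> nat) : (\prod_(i < 4) f i = f vz1 * f vz2 * f vZ1 * f vZ2)%N.
Proof.
rewrite !big_ord_recr big_ord0 /= mul1n.
by congr (_ * _ * _ * _)%N; congr f; apply: val_inj.
Qed.

Lemma all4 (P : 'I_4 -> Prop) : P vz1 -> P vz2 -> P vZ1 -> P vZ2 -> forall i, P i.
Proof.
move=> H0 H1 H2 H3 [[|[|[|[|i]]]] Hi] //.
- by rewrite (_ : Ordinal Hi = vz1) //; apply: val_inj.
- by rewrite (_ : Ordinal Hi = vz2) //; apply: val_inj.
- by rewrite (_ : Ordinal Hi = vZ1) //; apply: val_inj.
- by rewrite (_ : Ordinal Hi = vZ2) //; apply: val_inj.
Qed.

Lemma key (R : nzRingType) N (j k j' k' : nat) :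
  (j <= N)%N -> (k <= N)%N -> (j' <= N)%N -> (k' <= N)%N ->
  mderivm (sw (MM N j k)) ('X_[MM N j' k'] : {mpoly R[4]}) =
  if (j' == k) && (k' == j) then (k`! * (N-k)`! * j`! * (N-j)`!)%:R *: 1 else 0.
Proof.
move=> hj hk hj' hk'; rewrite mderivmX prod4 MM0 MM1 MM2 MM3 sw0 sw1 sw2 sw3.
rewrite MM0 MM1 MM2 MM3.
case: ifP => [/andP[/eqP-> /eqP->]|].
  rewrite !ffactnn; congr (_ *: _).
  rewrite -mpolyX0; congr 'X_[_]; apply/mnmP; apply: all4;
  by rewrite mnmBE ?(MM0,MM1,MM2,MM3,sw0,sw1,sw2,sw3) subnn mnm0E.
move=> H.
suff -> : (j' ^_ k * (N - j') ^_ (N - k) * k' ^_ j * (N - k') ^_ (N - j) = 0)%N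
  by rewrite scale0r.
have [e1|n1] := eqVneq j' k; have [e2|n2] := eqVneq k' j.
- by rewrite e1 e2 !eqxx in H.
- case: (ltngtP k' j) n2 => // h _.
  + by rewrite (ffact_small h) !muln0 mul0n.
  + rewrite (@ffact_small (N - k')) ?muln0 //; lia.
- case: (ltngtP j' k) n1 => // h _.
  + by rewrite (ffact_small h) !mul0n.
  + rewrite (@ffact_small (N - j')) ?muln0 ?mul0n //; lia.
- case: (ltngtP j' k) n1 => // h _.
  + by rewrite (ffact_small h) !mul0n.
  + rewrite (@ffact_small (N - j')) ?muln0 ?mul0n //; lia.
Qed.
Section D.
Variable F : nzRingType.
Implicit Types p q : {mpoly F[4]}.

Lemma diffopwE k p q : (msize p <= k)%N ->
  diffop p q = \sum_(m : 'X_{1..4 < k}) p@_m *: mderivm (sw m) q.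
Proof.
move=> lt_pk; pose I : subFinType _ := 'X_{1..4 < k}.
rewrite /diffop (big_mksub I) //=; first last.
  by move=> x /msize_mdeg_lt /leq_trans; apply.
  by rewrite msupp_uniq.
by rewrite big_rmcond //= => i; move/memN_msupp_eq0 ->; rewrite scale0r.
Qed.

Lemma diffopD p1 p2 q : diffop (p1 + p2) q = diffop p1 q + diffop p2 q.
Proof.
pose_big_enough i.
  rewrite !(@diffopwE i) // -big_split; apply/eq_bigr => m _.
  by rewrite mcoeffD scalerDl.
by close.
Qed.

Lemma diffopZ c p q : diffop (c *: p) q = c *: diffop p q.
Proof.
pose_big_enough i.
  rewrite !(@diffopwE i) // scaler_sumr; apply/eq_bigr => m _.
  by rewrite mcoeffZ scalerA.
by close.
Qed.

Lemma diffop0 q : diffop 0 q = 0.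
Proof. by rewrite /diffop msupp0 big_nil. Qed.

Lemma diffop_sum (I : Type) (r : seq I) (f : I -> {mpoly F[4]}) q :
  diffop (\sum_(i <- r) f i) q = \sum_(i <- r) diffop (f i) q.
Proof.
elim: r => [|a r IH]; first by rewrite !big_nil diffop0.
by rewrite !big_cons diffopD IH.
Qed.

Lemma diffopX m q : diffop 'X_[m] q = mderivm (sw m) q.
Proof. by rewrite /diffop msuppX big_seq1 mcoeffX eqxx scale1r. Qed.
End D.

Lemma mderivm_sum (R : nzRingType) m (I : Type) (r : seq I) (f : I -> {mpoly R[4]}) :
  mderivm m (\sum_(i <- r) f i) = \sum_(i <- r) mderivm m (f i).
Proof.
elim: r => [|a r IH]; first by rewrite !big_nil linear0.
by rewrite !big_cons mderivmD IH.
Qed.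

Lemma monoE (R : nzRingType) N (j k : nat) :
  ('X_vz1 ^+ j * 'X_vz2 ^+ (N - j) * 'X_vZ1 ^+ k * 'X_vZ2 ^+ (N - k)
    : {mpoly R[4]}) = 'X_[MM N j k].
Proof. by rewrite !mpolyXn -!mpolyXD. Qed.

Lemma majoranaE (F : numClosedFieldType) N (C : 'M[F]_N.+1) :
  majorana C = \sum_(j < N.+1) \sum_(k < N.+1)
     (majcoef F j * C j k * majcoef F k) *: 'X_[MM N j k].
Proof. by apply: eq_bigr => j _; apply: eq_bigr => k _; rewrite monoE. Qed.

Lemma HD (F : numClosedFieldType) N (D : 'M[F]_N.+1) (j k : 'I_N.+1) :
  mderivm (sw (MM N j k)) (majorana D) =
  (majcoef F k * D k j * majcoef F j * (k`! * (N-k)`! * j`! * (N-j)`!)%:R) *: 1.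
Proof.
rewrite majoranaE (big_morph (mderivm _) (mderivmD _) (linear0 _)).
under eq_bigr => i _ do rewrite (big_morph (mderivm _) (mderivmD _) (linear0 _)).
under eq_bigr => i _ do under eq_bigr => l _ do
  rewrite mderivmZ key ?(leq_ord, ltnSE (ltn_ord _)) //.
rewrite (bigD1 k) //= [X in _ + X]big1 ?addr0; last first.
  move=> i ik; rewrite big1 // => l _; case: ifP; rewrite ?scaler0 //.
  by case/andP => /eqP/val_inj/eqP; rewrite (negbTE ik).
rewrite (bigD1 j) //= big1 ?addr0; last first.
  move=> l lj; case: ifP; rewrite ?scaler0 //.
  by case/andP => _ /eqP/val_inj/eqP; rewrite (negbTE lj).
by rewrite !eqxx /= scalerA.
Qed.

Lemma sqc (F : numClosedFieldType) N (j : 'I_N.+1) :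
  majcoef F j * majcoef F j * (j`! * (N-j)`!)%:R = (N`!)%:R.
Proof.
rewrite /majcoef mulrACA -exprMn mulrNN mulr1 expr1n mul1r -expr2 sqrtCK -natrM.
congr (_%:R); have hj : (j <= N)%N := leq_ord j.
rewrite [(j`! * _)%N]mulnC.
rewrite -[X in (_ * (_ * X`!))%N](subKn hj).
by rewrite bin_fact // leq_subr.
Qed.

Theorem lemma2 (F : numClosedFieldType) (N : nat) (hN : (0 < N)%N)
  (C D : 'M[F]_N.+1) :
  ((\tr (C *m D))%:MP = (N`! %:R ^- 2) *: diffop (majorana C) (majorana D))
  /\ (\tr (C *m D) = 0 -> diffop (majorana C) (majorana D) = 0).
Proof.
have nz : (N`!%:R : F) ^+ 2 != 0.
  by rewrite expf_neq0 // pnatr_eq0 -lt0n fact_gt0.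
have H1 : (\tr (C *m D))%:MP = (N`! %:R ^- 2) *: diffop (majorana C) (majorana D).
  rewrite [majorana C]majoranaE diffop_sum.
  under eq_bigr => j _ do rewrite diffop_sum.
  under eq_bigr => j _ do under eq_bigr => k _ do rewrite diffopZ diffopX HD scalerA.
  under eq_bigr => j _ do rewrite -scaler_suml.
  rewrite -scaler_suml scalerA -[LHS]mulr1 mul_mpolyC; congr (_ *: 1).
  rewrite /mxtrace; apply: (mulfI nz); rewrite mulrA mulfV // mul1r mulr_sumr.
  apply: eq_bigr => j _; rewrite mxE mulr_sumr; apply: eq_bigr => k _.
  have e : ((k`! * (N-k)`! * j`! * (N-j)`!) = (k`! * (N-k)`!) * (j`! * (N-j)`!))%N.
    by rewrite !mulnA.
  rewrite e natrM.
  transitivity (C j k * D k j * (majcoef F k * majcoef F k * (k`! * (N-k)`!)%:R)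
                 * (majcoef F j * majcoef F j * (j`! * (N-j)`!)%:R)).
    by rewrite !sqc; ring.
  ring.
split => // h0.
have := congr1 (fun p => (N`!%:R : F) ^+ 2 *: p) H1.
by rewrite h0 scalerA mulfV // scale1r /= scaler0 => <-.
Qed.
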